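(* Let $m>n$ be coprime positive integers, $k\in\mathbb Z$, $\alpha=\epsilon_i-\delta_j$ and $\beta=\nu^{-k}(\alpha)$. If $\lambda\in X_{\pm\alpha}$, then $x(\lambda,k)\in\Pi_{\pm\beta}$ and $x(t_{\pm\alpha}(\lambda),k)=\tau_{\pm\beta}(x(\lambda,k))$.
   Context: $X$ is the set of partitions $\lambda=(\lambda_1\ge\dots\ge\lambda_n\ge0)$ with $\lambda_1\le m$, drawn in an $n\times m$ rectangle with rows $\epsilon_1,\dots,\epsilon_n$ top to bottom and columns $\delta_1,\dots,\delta_m$; the diagram consists of boxes $\epsilon_p-\delta_q$ with $q\le\lambda_{n+1-p}$; $\lambda'_q=\#\{p:\lambda_p\ge q\}$. $X_\alpha$ (resp. $X_{-\alpha}$): diagrams for which box $\alpha$ is an outer (resp. inner) corner; $t_\alpha$ adds and $t_{-\alpha}$ removes it. Elements of $\mathbb Z^{n|m}$ are $(a_1,\dots,a_n|b_1,\dots,b_m)=\sum a_p\epsilon_p-\sum b_q\delta_q$. $x(\lambda)$ has $a_p=m(n-p)+n\lambda_{n+1-p}$, $b_q=n(q-1)+m\lambda'_q$, and $x(\lambda,k)=\nu^{-k}x(\lambda)+k\mathbf m$ with $\mathbf m=(m,\dots,m|m,\dots,m)$, where $\nu$ is linear with $\nu\epsilon_p=\epsilon_{p+1}$ (indices mod $n$ in $\{1,\dots,n\}$), $\nu\delta_q=\delta_q$. For $\gamma=\epsilon_p-\delta_q$: $\Pi_\gamma=\{a_p=b_q\}$, $\Pi_{-\gamma}=\{a_p-b_q=n-m\}$,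 $\tau_\gamma$ adds $n$ to $a_p$ and $m$ to $b_q$, $\tau_{-\gamma}=\tau_\gamma^{-1}$. *)

(* Defs.v *)
From mathcomp Require Import all_boot all_order all_algebra.
Set Implicit Arguments. Unset Strict Implicit. Unset Printing Implicit Defensive.
Import GRing.Theory Num.Theory.
Local Open Scope ring_scope.

(* Conventions (0-based ordinals for the 1-based indices of the paper):
   - the ordinal p : 'I_n stands for the row / vector index eps_(p+1);
   - the ordinal q : 'I_m stands for the column / vector index delta_(q+1);
   - a partition lambda = (lambda_1 >= ... >= lambda_n >= 0) is an
     l : {ffun 'I_n -> nat} with  l r = lambda_(r+1).
   Row p (1-based) has length lambda_(n+1-p); in 0-based terms row p : 'I_n
   has length  l (rev_ord p). *)

Definition part (n : nat) := {ffun 'I_n -> nat}.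

Definition inX (n m : nat) (l : part n) : Prop :=
  (forall r s : 'I_n, (r <= s)%N -> (l s <= l r)%N) /\ (forall r, (l r <= m)%N).

(* a box eps_p - delta_q is encoded as the pair (p, q) *)
Definition box (n m : nat) := ('I_n * 'I_m)%type.

Definition diag (n m : nat) (l : part n) : {set box n m} :=
  [set b : box n m | (b.2.+1 <= l (rev_ord b.1))%N].

Definition X_add (n m : nat) (a : box n m) (l : part n) : Prop :=
  inX m l /\ a \notin diag m l /\
  exists mu : part n, inX m mu /\ diag m mu = a |: diag m l.

Definition X_rem (n m : nat) (a : box n m) (l : part n) : Prop :=
  inX m l /\ a \in diag m l /\
  exists mu : part n, inX m mu /\ diag m mu = diag m l :\ a.

Definition t_add (n m : nat) (a : box n m) (l : part n) : part n :=
  [ffun r => if r == rev_ord a.1 then a.2.+1 else l r].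

Definition t_rem (n m : nat) (a : box n m) (l : part n) : part n :=
  [ffun r => if r == rev_ord a.1 then nat_of_ord a.2 else l r].

(* Z^{n|m}: (a_1..a_n | b_1..b_m) = sum a_p eps_p - sum b_q delta_q *)
Definition zvec (n m : nat) := ({ffun 'I_n -> int} * {ffun 'I_m -> int})%type.

Definition conj_part (n : nat) (l : part n) (q : nat) : nat :=
  #|[set r : 'I_n | (q <= l r)%N]|.

Definition xl (n m : nat) (l : part n) : zvec n m :=
  ([ffun p : 'I_n => ((m * (n - p.+1) + n * l (rev_ord p))%N)%:Z],
   [ffun q : 'I_m => ((n * q + m * conj_part l q.+1)%N)%:Z]).

Definition zit (T : Type) (f g : T -> T) (j : int) : T -> T :=
  match j with
  | Posz k => iter k f
  | Negz k => iter k.+1 g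
  end.

(* nu : eps_p |-> eps_(p+1) (indices mod n), delta_q |-> delta_q, extended
   linearly to Z^{n|m}: the coefficient of eps_r in nu x is a_(r-1). *)
Definition nu_vec (n m : nat) (x : zvec n m) : zvec n m :=
  ([ffun r => x.1 (ord_pred r)], x.2).
Definition nu_vec_inv (n m : nat) (x : zvec n m) : zvec n m :=
  ([ffun r => x.1 (ordS r)], x.2).
Definition nuz_vec (n m : nat) (j : int) : zvec n m -> zvec n m :=
  zit (@nu_vec n m) (@nu_vec_inv n m) j.

Definition nu_root (n m : nat) (a : box n m) : box n m := (ordS a.1, a.2).
Definition nu_root_inv (n m : nat) (a : box n m) : box n m := (ord_pred a.1, a.2).
Definition nuz_root (n m : nat) (j : int) : box n m -> box n m :=
  zit (@nu_root n m) (@nu_root_inv n m) j.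

Definition xk (n m : nat) (l : part n) (k : int) : zvec n m :=
  let y := nuz_vec (- k) (xl m l) in
  ([ffun p => y.1 p + k * m%:Z], [ffun q => y.2 q + k * m%:Z]).

Definition Pi_pos (n m : nat) (g : box n m) (x : zvec n m) : Prop :=
  x.1 g.1 = x.2 g.2.
Definition Pi_neg (n m : nat) (g : box n m) (x : zvec n m) : Prop :=
  x.1 g.1 - x.2 g.2 = n%:Z - m%:Z.

Definition tau_pos (n m : nat) (g : box n m) (x : zvec n m) : zvec n m :=
  ([ffun p => if p == g.1 then x.1 p + n%:Z else x.1 p],
   [ffun q => if q == g.2 then x.2 q + m%:Z else x.2 q]).
Definition tau_neg (n m : nat) (g : box n m) (x : zvec n m) : zvec n m :=
  ([ffun p => if p == g.1 then x.1 p - n%:Z else x.1 p],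
   [ffun q => if q == g.2 then x.2 q - m%:Z else x.2 q]).

(* Main.v *)
Require Import Defs.
From mathcomp Require Import all_boot all_order all_algebra zify.
Import GRing.Theory Num.Theory.
Local Open Scope ring_scope.

Lemma card_lt_ord (n k : nat) : (k <= n)%N -> #|[set r : 'I_n | (r < k)%N]| = k.
Proof.
move=> kn.
have -> : [set r : 'I_n | (r < k)%N] = [set widen_ord kn x | x : 'I_k].
  apply/setP=> r; rewrite inE; apply/idP/imsetP.
    by move=> rk; exists (Ordinal rk) => //; apply: val_inj.
  by case=> x _ ->; rewrite /= ltn_ord.
rewrite card_imset ?card_ord //.
by move=> x y /(congr1 val) /= /val_inj.
Qed.

Lemma nat_eq_of_lt (m x y : nat) : (x <= m)%N -> (y <= m)%N ->
  (forall q : 'I_m, (q < x)%N = (q < y)%N) -> x = y.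
Proof.
move=> xm ym H; apply/eqP; rewrite eqn_leq; apply/andP; split; rewrite leqNgt; apply/negP=> lt.
  have qm : (y < m)%N by apply: leq_trans lt xm.
  by have := H (Ordinal qm); rewrite /= lt ltnn.
have qm : (x < m)%N by apply: leq_trans lt ym.
by have := H (Ordinal qm); rewrite /= lt ltnn.
Qed.

Lemma diag_row (n m : nat) (l : part n) (p : 'I_n) (q : 'I_m) :
  ((p, q) \in diag m l) = (q < l (rev_ord p))%N.
Proof. by rewrite inE. Qed.

Lemma add_facts (n m : nat) (i : 'I_n) (j : 'I_m) (l : part n) :
  X_add (i, j) l ->
  l (rev_ord i) = j /\ conj_part l j.+1 = rev_ord i.
Proof.
case=> [[lmon lm] [nin [mu [[mmon mm] dm]]]].
have Hrow : forall p : 'I_n, forall q : 'I_m,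
   (q < mu (rev_ord p))%N = ((p, q) == (i, j)) || (q < l (rev_ord p))%N.
  by move=> p q; rewrite -diag_row dm in_setU1 diag_row.
move: nin; rewrite diag_row -leqNgt => lij.
have lij' : l (rev_ord i) = j.
  apply/eqP; rewrite eqn_leq lij /= leqNgt; apply/negP=> lt.
  have qm : (l (rev_ord i) < m)%N by exact: ltn_trans lt (ltn_ord j).
  have := Hrow i (Ordinal qm); rewrite /= ltnn orbF.
  have := Hrow i j; rewrite eqxx /= => Hj.
  rewrite xpair_eqE eqxx /=.
  have -> : (Ordinal qm == j) = false by apply/negbTE; rewrite -val_eqE /= neq_ltn lt.
  by rewrite (ltn_trans lt Hj).
have Hoth : forall r : 'I_n, r != rev_ord i -> mu r = l r.
  move=> r rne; apply: (nat_eq_of_lt _ _ _ (mm r) (lm r)) => q.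
  have := Hrow (rev_ord r) q; rewrite rev_ordK => ->.
  rewrite xpair_eqE.
  have -> : (rev_ord r == i) = false.
    by apply/negbTE; apply: contra rne => /eqP <-; rewrite rev_ordK.
  by [].
have Hmi : mu (rev_ord i) = j.+1.
  apply: (nat_eq_of_lt _ _ _ (mm _) (ltn_ord j)) => q.
  rewrite Hrow xpair_eqE eqxx /= lij' -val_eqE /=.
  lia.
split=> //.
rewrite /conj_part.
have -> : [set r : 'I_n | (j.+1 <= l r)%N] = [set r : 'I_n | (r < rev_ord i)%N].
  apply/setP=> r; rewrite !inE.
  case: (ltngtP r (rev_ord i)) => hr.
  - have rne : r != rev_ord i by rewrite neq_ltn hr.
    by rewrite -(Hoth r rne) -Hmi; apply: mmon; apply: ltnW.
  - apply/negbTE; rewrite -ltnNge ltnS -lij'; apply: lmon; exact: ltnW.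
  - by rewrite (val_inj hr) lij' ltnn.
by rewrite card_lt_ord // ltnW // ltn_ord.
Qed.

Lemma rem_facts (n m : nat) (i : 'I_n) (j : 'I_m) (l : part n) :
  X_rem (i, j) l ->
  l (rev_ord i) = j.+1 /\ conj_part l j.+1 = (rev_ord i).+1.
Proof.
case=> [[lmon lm] [nin [mu [[mmon mm] dm]]]].
have Hrow : forall p : 'I_n, forall q : 'I_m,
   (q < mu (rev_ord p))%N = ((p, q) != (i, j)) && (q < l (rev_ord p))%N.
  by move=> p q; rewrite -diag_row dm in_setD1 diag_row.
move: nin; rewrite diag_row => lij.
have lij' : l (rev_ord i) = j.+1.
  apply/eqP; rewrite eqn_leq lij andbT leqNgt; apply/negP=> lt.
  have qm : (j.+1 < m)%N by exact: leq_trans lt (lm _).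
  have := Hrow i (Ordinal qm); rewrite /= lt andbT xpair_eqE eqxx /=.
  have -> : (Ordinal qm == j) = false by apply/negbTE; rewrite -val_eqE /=; lia.
  have := Hrow i j; rewrite eqxx /= => Hj Hq.
  by move: Hj; rewrite (ltn_trans (ltnSn j) Hq).
have Hoth : forall r : 'I_n, r != rev_ord i -> mu r = l r.
  move=> r rne; apply: (nat_eq_of_lt _ _ _ (mm r) (lm r)) => q.
  have := Hrow (rev_ord r) q; rewrite rev_ordK => ->.
  rewrite xpair_eqE.
  have -> : (rev_ord r == i) = false.
    by apply/negbTE; apply: contra rne => /eqP <-; rewrite rev_ordK.
  by [].
have Hmi : mu (rev_ord i) = j.
  apply: (nat_eq_of_lt _ _ _ (mm _) (ltnW (ltn_ord j))) => q.
  rewrite Hrow xpair_eqE eqxx /= lij' -val_eqE /=.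
  lia.
split=> //.
rewrite /conj_part.
have -> : [set r : 'I_n | (j.+1 <= l r)%N] = [set r : 'I_n | (r < (rev_ord i).+1)%N].
  apply/setP=> r; rewrite !inE ltnS.
  case: (ltngtP r (rev_ord i)) => hr.
  - by rewrite -lij'; apply: lmon; apply: ltnW.
  - have rne : r != rev_ord i by rewrite neq_ltn hr orbT.
    apply/negbTE; rewrite -ltnNge ltnS -(Hoth r rne) -Hmi; apply: mmon; exact: ltnW.
  - by rewrite (val_inj hr) lij' leqnn.
by rewrite card_lt_ord // ltn_ord.
Qed.

Lemma conj_t_add (n : nat) (i : 'I_n) (j q : nat) (l : part n) :
  l (rev_ord i) = j ->
  conj_part [ffun r => if r == rev_ord i then j.+1 else l r] q.+1
  = (conj_part l q.+1 + (q == j))%N.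
Proof.
move=> lij; rewrite /conj_part.
case: (eqVneq q j) => [->|qj].
  have -> : [set r : 'I_n | (j.+1 <= [ffun r => if r == rev_ord i then j.+1 else l r] r)%N]
     = rev_ord i |: [set r : 'I_n | (j.+1 <= l r)%N].
    apply/setP=> r; rewrite !inE ffunE; case: eqP => [->|] //=. exact: ltnSn.
  by rewrite cardsU1 inE lij ltnn addnC.
rewrite addn0; apply: eq_card => r; rewrite !inE ffunE; case: eqP => [->|] //.
rewrite lij ltnS; lia.
Qed.

Lemma conj_t_rem (n : nat) (i : 'I_n) (j q : nat) (l : part n) :
  l (rev_ord i) = j.+1 ->
  conj_part l q.+1 =
  (conj_part [ffun r => if r == rev_ord i then j else l r] q.+1 + (q == j))%N.
Proof.
move=> lij; rewrite /conj_part.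
case: (eqVneq q j) => [->|qj].
  have -> : [set r : 'I_n | (j.+1 <= l r)%N]
     = rev_ord i |: [set r : 'I_n | (j.+1 <= [ffun r => if r == rev_ord i then j else l r] r)%N].
    apply/setP=> r; rewrite !inE ffunE; case: eqP => [->|] //=.
    by rewrite lij ltnSn.
  by rewrite cardsU1 !inE ffunE eqxx ltnn addnC.
rewrite addn0; apply: eq_card => r; rewrite !inE ffunE; case: eqP => [->|] //.
rewrite lij; lia.
Qed.

Lemma xl_add (n m : nat) (i : 'I_n) (j : 'I_m) (l : part n) :
  l (rev_ord i) = j -> xl m (t_add (i, j) l) = tau_pos (i, j) (xl m l).
Proof.
move=> lij; rewrite /xl /t_add /tau_pos /=; congr pair; apply/ffunP => p; rewrite !ffunE /=.
  rewrite (inj_eq rev_ord_inj).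
  case: eqP => [->|_] //; rewrite lij -PoszD; congr Posz; lia.
rewrite conj_t_add // -val_eqE /=.
case: eqP => [->|_] /=; last by rewrite addn0.
by rewrite -PoszD; congr Posz; lia.
Qed.

Lemma xl_rem (n m : nat) (i : 'I_n) (j : 'I_m) (l : part n) :
  l (rev_ord i) = j.+1 -> xl m (t_rem (i, j) l) = tau_neg (i, j) (xl m l).
Proof.
move=> lij; rewrite /xl /t_rem /tau_neg /=; congr pair; apply/ffunP => p; rewrite !ffunE /=.
  rewrite (inj_eq rev_ord_inj).
  case: eqP => [->|_] //; rewrite lij; apply/eqP; rewrite eq_sym subr_eq.
  rewrite -!PoszD; apply/eqP; congr Posz; lia.
rewrite (conj_t_rem _ _ _ _ _ lij) -val_eqE /=.
case: eqP => [->|_] /=; last by rewrite addn0.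
apply/eqP; rewrite eq_sym subr_eq -!PoszD; apply/eqP; congr Posz; lia.
Qed.

Section Nu.
Variables n m : nat.
Implicit Types (x : zvec n m) (a : box n m).

Lemma ordS_pred_eq (r s : 'I_n) : (ord_pred r == s) = (r == ordS s).
Proof. by rewrite -(inj_eq (@ordS_inj n)) ord_predK. Qed.

Lemma ordpred_S_eq (r s : 'I_n) : (ordS r == s) = (r == ord_pred s).
Proof. by rewrite -(inj_eq (@ord_pred_inj n)) ordSK. Qed.

Lemma nuz_vec2 j x : (nuz_vec j x).2 = x.2.
Proof.
case: j => k /=; elim: k => [|k IH] //=.
Qed.

Lemma nuz_root2 j a : (nuz_root j a).2 = a.2.
Proof.
case: j => k /=; elim: k => [|k IH] //=.
Qed.

Lemma nuz_vec1 j x a : (nuz_vec j x).1 (nuz_root j a).1 = x.1 a.1.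
Proof.
rewrite /nuz_vec /nuz_root; case: j => k /=.
  elim: k x a => [|k IH] x a //=.
  by rewrite ffunE ordSK IH.
elim: k x a => [|k IH] x a /=.
  by rewrite ffunE ord_predK.
by rewrite ffunE ord_predK -[in RHS](IH x a).
Qed.

Lemma nu_tau_pos x a : nu_vec (tau_pos a x) = tau_pos (nu_root a) (nu_vec x).
Proof.
rewrite /nu_vec /tau_pos /=; congr pair; apply/ffunP=> r; rewrite !ffunE.
by rewrite ordS_pred_eq.
Qed.

Lemma nuinv_tau_pos x a : nu_vec_inv (tau_pos a x) = tau_pos (nu_root_inv a) (nu_vec_inv x).
Proof.
rewrite /nu_vec_inv /tau_pos /=; congr pair; apply/ffunP=> r; rewrite !ffunE.
by rewrite ordpred_S_eq.
Qed.

Lemma nu_tau_neg x a : nu_vec (tau_neg a x) = tau_neg (nu_root a) (nu_vec x).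
Proof.
rewrite /nu_vec /tau_neg /=; congr pair; apply/ffunP=> r; rewrite !ffunE.
by rewrite ordS_pred_eq.
Qed.

Lemma nuinv_tau_neg x a : nu_vec_inv (tau_neg a x) = tau_neg (nu_root_inv a) (nu_vec_inv x).
Proof.
rewrite /nu_vec_inv /tau_neg /=; congr pair; apply/ffunP=> r; rewrite !ffunE.
by rewrite ordpred_S_eq.
Qed.

Lemma nuz_tau_pos j x a :
  nuz_vec j (tau_pos a x) = tau_pos (nuz_root j a) (nuz_vec j x).
Proof.
rewrite /nuz_vec /nuz_root; case: j => k /=.
  by elim: k => [|k IH] //=; rewrite IH nu_tau_pos.
by elim: k => [|k IH] /=; rewrite ?IH nuinv_tau_pos.
Qed.

Lemma nuz_tau_neg j x a :
  nuz_vec j (tau_neg a x) = tau_neg (nuz_root j a) (nuz_vec j x).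
Proof.
rewrite /nuz_vec /nuz_root; case: j => k /=.
  by elim: k => [|k IH] //=; rewrite IH nu_tau_neg.
by elim: k => [|k IH] /=; rewrite ?IH nuinv_tau_neg.
Qed.
End Nu.

Theorem lemma4p13 (n m : nat) (hn : (0 < n)%N) (hnm : (n < m)%N)
  (hcop : coprime m n) (k : int) (i : 'I_n) (j : 'I_m) (l : part n) :
  let alpha : box n m := (i, j) in
  let beta : box n m := nuz_root (- k) alpha in
  (X_add alpha l ->
     Pi_pos beta (xk m l k) /\ xk m (t_add alpha l) k = tau_pos beta (xk m l k)) /\
  (X_rem alpha l ->
     Pi_neg beta (xk m l k) /\ xk m (t_rem alpha l) k = tau_neg beta (xk m l k)).
Proof.
move=> alpha beta; split=> H.
  have [lij cj] := add_facts _ _ _ _ _ H.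
  split.
    rewrite /Pi_pos /xk /beta !ffunE nuz_vec1 nuz_vec2 nuz_root2 /= !ffunE.
    congr (_ + _); rewrite lij cj; congr Posz; rewrite /=; lia.
  rewrite /xk xl_add // nuz_tau_pos -/beta /tau_pos /=; congr pair; apply/ffunP=> r;
    rewrite !ffunE; case: eqP => _ //; by rewrite addrAC.
have [lij cj] := rem_facts _ _ _ _ _ H.
split.
  rewrite /Pi_neg /xk /beta !ffunE nuz_vec1 nuz_vec2 nuz_root2 /= !ffunE.
  rewrite opprD addrACA subrr addr0 lij cj.
  apply/eqP; rewrite subr_eq eq_sym addrC addrA subr_eq -!PoszD; apply/eqP; congr Posz. rewrite /=; lia.
rewrite /xk xl_rem // nuz_tau_neg -/beta /tau_neg /=; congr pair; apply/ffunP=> r;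
  rewrite !ffunE; case: eqP => _ //; by rewrite addrAC.
Qed.
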